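(* Let $L=\langle S,A,\to\rangle$ be a labelled transition system. For all $x,y\in\{o,b\}$ and all states $s,t\in S$, we have $s \mathrel{\underline{\leftrightarrow}}_{(x,y)} t$ (i.e. $s$ and $t$ are $(x,y)$-generic bisimilar) if and only if $s \equiv_{E(x,y)} t$ (i.e. Duplicator wins the $E(x,y)$-generic bisimulation game from $\langle (s,t),\dagger,\dagger,*\rangle_S$).
   Context: A labelled transition system (LTS) is $L=\langle S,A,\to\rangle$ with $S$ a set of states, $A$ a set of actions containing a special internal action $\tau$, and $\to\subseteq S\times A\times S$; write $s\xrightarrow{a}t$ for $(s,a,t)\in\to$. Let $\twoheadrightarrow$ be the reflexive-transitive closure of $\xrightarrow{\tau}$. Generic bisimulation. For $R\subseteq S\times S$ and $s,s',t\in S$: $s\twoheadrightarrow_{o,R,t}s'$ iff $s\twoheadrightarrow s'$; $s\twoheadrightarrow_{b,R,t}s'$ iff $s\twoheadrightarrow s'$, $t\,R\,s$ and $t\,R\,s'$. For $x,y\in\{o,b\}$, a symmetric relation $R\subseteq S\times S$ is an $(x,y)$-generic bisimulation if whenever $s\,R\,t$ and $s\xrightarrow{a}s'$, either (i) $a=\tau$ and $s'\,R\,t$, or (ii) there exist $t',t_1,t_2$ with $t\twoheadrightarrow_{x,R,s}t_1\xrightarrow{a}t_2\twoheadrightarrow_{y,R,s'}t'$ and $s'\,R\,t'$. Write $s\mathrel{\underline{\leftrightarrow}}_{(x,y)}t$ iff some $(x,y)$-generic bisimulation relates $s$ and $t$. Generic bisimulation game. Let $\frown,\smile$ be two formal tags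 and $E\subseteq\{\frown,\smile\}$. The $E$-generic bisimulation game on $L$ is played by Spoiler and Duplicator on Spoiler-owned configurations $\langle (s,t),c,m,r\rangle_S$ and Duplicator-owned configurations $\langle (s,t),c,m,r\rangle_D$, where $(s,t)\in S\times S$, $c\in (A\times S)\cup\{\dagger\}$ (challenge), $m\in (S\times\{\frown,\smile\})\cup\{\dagger\}$ (partial match), $r\in\{*,\checkmark\}$ (reward). From $\langle (s,t),c,m,r\rangle_S$ Spoiler may: (S1) move to $\langle (s,t),c,m,*\rangle_D$ if $c\neq\dagger$; (S2a) for some $s\xrightarrow{a}s'$, move to $\langle (s,t),(a,s'),(t,\frown),*\rangle_D$ if $c=\dagger$; (S2b) for some $s\xrightarrow{a}s'$, move to $\langle (s,t),(a,s'),(t,\frown),\checkmark\rangle_D$ if $c\neq (a,s')$; (S3) for some $t\xrightarrow{a}t'$, move to $\langle (t,s),(a,t'),(s,\frown),\checkmark\rangle_D$. From $\langle (u,v),(a,u'),(\bar v,f),r\rangle_D$ Duplicator may: (D1) move to $\langle (u',\bar v),\dagger,\dagger,\checkmark\rangle_S$ if $a=\tau$; (D2) if $f=\frown$ and $\bar v\xrightarrow{a}v'$: (a) move to $\langle (u',v'),(a,u'),(v',\smile),*\rangle_S$, or (b) move to $\langle (u',v'),\dagger,\dagger,\checkmark\rangle_S$, or (c) only if $\smile\in E$, move to $\langle (u,v),(a,u'),(v',\smile),*\rangle_S$; (D3) for some $\bar v\xrightarrow{\tau}v'$: (a) move to $\langle (u,v'),(a,u'),(v',f),*\rangle_S$,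 or (b) only if $f=\smile$, move to $\langle (u',v'),\dagger,\dagger,\checkmark\rangle_S$, or (c) only if $f\in E$, move to $\langle (u,v),(a,u'),(v',f),*\rangle_S$. Duplicator wins a finite play if Spoiler gets stuck, and an infinite play if it contains infinitely many configurations with reward $\checkmark$; all other plays are won by Spoiler. A player wins a configuration if she has a strategy that wins all plays starting in it. Write $s\equiv_E t$ iff Duplicator wins $\langle (s,t),\dagger,\dagger,*\rangle_S$. $E(x,y)$ is the smallest set such that $\frown\in E(o,y)$ and $\smile\in E(x,o)$ for all $x,y\in\{o,b\}$; thus $E(b,b)=\emptyset$, $E(o,b)=\{\frown\}$, $E(b,o)=\{\smile\}$, $E(o,o)=\{\frown,\smile\}$. *)

(* Defs.v *)
From Stdlib Require Import List.
Set Implicit Arguments.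

Inductive tau_star {St Act : Type} (tau : Act) (tr : St -> Act -> St -> Prop)
  : St -> St -> Prop :=
| ts_refl s : tau_star tau tr s s
| ts_step s s1 s' : tr s tau s1 -> tau_star tau tr s1 s' -> tau_star tau tr s s'.

Inductive Mode := O | B.

Definition gstep {St Act : Type} (tau : Act) (tr : St -> Act -> St -> Prop)
  (x : Mode) (R : St -> St -> Prop) (t s s' : St) : Prop :=
  match x with
  | O => tau_star tau tr s s'
  | B => tau_star tau tr s s' /\ R t s /\ R t s'
  end.

Definition generic_bisim {St Act : Type} (tau : Act) (tr : St -> Act -> St -> Prop)
  (x y : Mode) (R : St -> St -> Prop) : Prop :=
  (forall s t, R s t -> R t s) /\
  (forall s t a s', R s t -> tr s a s' ->
     (a = tau /\ R s' t) \/
     (exists t' t1 t2, gstep tau tr x R s t t1 /\ tr t1 a t2 /\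
                       gstep tau tr y R s' t2 t' /\ R s' t')).

Definition generic_bisimilar {St Act : Type} (tau : Act) (tr : St -> Act -> St -> Prop)
  (x y : Mode) (s t : St) : Prop :=
  exists R, generic_bisim tau tr x y R /\ R s t.

Inductive Tag := Frown | Smile.

Definition tagset := Tag -> bool.

Definition Exy (x y : Mode) : tagset :=
  fun f => match f with
           | Frown => match x with O => true | B => false end
           | Smile => match y with O => true | B => false end
           end.

Inductive Player := Spoiler | Duplicator.

(** Configurations ⟨(s,t), c, m, r⟩_P.  [None] encodes †; the reward
    [true] encodes ✓ and [false] encodes *. *)
Record config (St Act : Type) := Cfg {
  cpos : St * St;
  cch : option (Act * St);
  cm : option (St * Tag);
  ccheck : bool;
  cown : Player }.
Arguments Cfg {St Act}.

Inductive move {St Act : Type} (tau : Act) (tr : St -> Act -> St -> Prop) (E : tagset)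
  : config St Act -> config St Act -> Prop :=
| mS1 s t c m r : c <> None ->
    move tau tr E (Cfg (s,t) c m r Spoiler) (Cfg (s,t) c m false Duplicator)
| mS2a s t m r a s' : tr s a s' ->
    move tau tr E (Cfg (s,t) None m r Spoiler)
         (Cfg (s,t) (Some (a,s')) (Some (t,Frown)) false Duplicator)
| mS2b s t c m r a s' : tr s a s' -> c <> Some (a,s') ->
    move tau tr E (Cfg (s,t) c m r Spoiler)
         (Cfg (s,t) (Some (a,s')) (Some (t,Frown)) true Duplicator)
| mS3 s t c m r a t' : tr t a t' ->
    move tau tr E (Cfg (s,t) c m r Spoiler)
         (Cfg (t,s) (Some (a,t')) (Some (s,Frown)) true Duplicator)
| mD1 u v a u' vb f r : a = tau ->
    move tau tr E (Cfg (u,v) (Some (a,u')) (Some (vb,f)) r Duplicator)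
         (Cfg (u',vb) None None true Spoiler)
| mD2a u v a u' vb f r v' : f = Frown -> tr vb a v' ->
    move tau tr E (Cfg (u,v) (Some (a,u')) (Some (vb,f)) r Duplicator)
         (Cfg (u',v') (Some (a,u')) (Some (v',Smile)) false Spoiler)
| mD2b u v a u' vb f r v' : f = Frown -> tr vb a v' ->
    move tau tr E (Cfg (u,v) (Some (a,u')) (Some (vb,f)) r Duplicator)
         (Cfg (u',v') None None true Spoiler)
| mD2c u v a u' vb f r v' : f = Frown -> tr vb a v' -> E Smile = true ->
    move tau tr E (Cfg (u,v) (Some (a,u')) (Some (vb,f)) r Duplicator)
         (Cfg (u,v) (Some (a,u')) (Some (v',Smile)) false Spoiler)
| mD3a u v a u' vb f r v' : tr vb tau v' ->
    move tau tr E (Cfg (u,v) (Some (a,u')) (Some (vb,f)) r Duplicator)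
         (Cfg (u,v') (Some (a,u')) (Some (v',f)) false Spoiler)
| mD3b u v a u' vb f r v' : tr vb tau v' -> f = Smile ->
    move tau tr E (Cfg (u,v) (Some (a,u')) (Some (vb,f)) r Duplicator)
         (Cfg (u',v') None None true Spoiler)
| mD3c u v a u' vb f r v' : tr vb tau v' -> E f = true ->
    move tau tr E (Cfg (u,v) (Some (a,u')) (Some (vb,f)) r Duplicator)
         (Cfg (u,v) (Some (a,u')) (Some (v',f)) false Spoiler).

(** A (history-dependent, deterministic) Duplicator strategy: given the
    history of previous configurations (oldest first) and the current
    configuration, it chooses the next configuration. *)
Definition strategy (St Act : Type) :=
  list (config St Act) -> config St Act -> config St Act.

Definition hist {C : Type} (p : nat -> C) (i : nat) : list C :=
  map p (seq 0 i).

Definition consistent_prefix {St Act : Type} (tau : Act) (tr : St -> Act -> St -> Prop)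
  (E : tagset) (sigma : strategy St Act) (p : nat -> config St Act) (n : nat) : Prop :=
  forall i, i < n ->
    move tau tr E (p i) (p (S i)) /\
    (cown (p i) = Duplicator -> p (S i) = sigma (hist p i) (p i)).

Definition legal_strategy {St Act : Type} (tau : Act) (tr : St -> Act -> St -> Prop)
  (E : tagset) (sigma : strategy St Act) (c0 : config St Act) : Prop :=
  forall p n, p 0 = c0 -> consistent_prefix tau tr E sigma p n ->
    cown (p n) = Duplicator -> move tau tr E (p n) (sigma (hist p n) (p n)).

(** Length of a play: finite ending at index n, or infinite. *)
Inductive plen := Fin (n : nat) | Inf.

Definition is_play {St Act : Type} (tau : Act) (tr : St -> Act -> St -> Prop)
  (E : tagset) (sigma : strategy St Act) (c0 : config St Act)
  (p : nat -> config St Act) (len : plen) : Prop :=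
  p 0 = c0 /\
  match len with
  | Fin n => consistent_prefix tau tr E sigma p n /\
             (forall d, ~ move tau tr E (p n) d)
  | Inf => forall n, consistent_prefix tau tr E sigma p n
  end.

Definition dup_wins_play {St Act : Type} (p : nat -> config St Act) (len : plen) : Prop :=
  match len with
  | Fin n => cown (p n) = Spoiler
  | Inf => forall N, exists i, N <= i /\ ccheck (p i) = true
  end.

Definition dup_wins {St Act : Type} (tau : Act) (tr : St -> Act -> St -> Prop)
  (E : tagset) (c0 : config St Act) : Prop :=
  exists sigma : strategy St Act,
    legal_strategy tau tr E sigma c0 /\
    forall p len, is_play tau tr E sigma c0 p len -> dup_wins_play p len.

Definition game_equiv {St Act : Type} (tau : Act) (tr : St -> Act -> St -> Prop)
  (E : tagset) (s t : St) : Prop :=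
  dup_wins tau tr E (Cfg (s,t) None None false Spoiler).

(* Main.v *)
Require Import Defs.
From Stdlib Require Import List Arith Lia Classical ClassicalEpsilon.
Import ListNotations.
Set Implicit Arguments.

Section Gen.
Context {St Act : Type} (tau : Act) (tr : St -> Act -> St -> Prop).

Notation ts := (tau_star tau tr).

Lemma ts_one a b : tr a tau b -> ts a b.
Proof. intro H. eapply ts_step; eauto. apply ts_refl. Qed.

Lemma ts_trans a b c : ts a b -> ts b c -> ts a c.
Proof. intro H; revert c; induction H; intros; eauto. eapply ts_step; eauto. Qed.

Lemma ts_snoc a b c : ts a b -> tr b tau c -> ts a c.
Proof. intros; eapply ts_trans; eauto using ts_one. Qed.

Lemma ts_last a b : ts a b -> a = b \/ exists c, ts a c /\ tr c tau b.
Proof.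
  induction 1 as [s|s s1 s' H1 H2 IH]; auto.
  right. destruct IH as [<-|[c [Hc1 Hc2]]].
  - exists s; split; auto. apply ts_refl.
  - exists c; split; auto. eapply ts_step; eauto.
Qed.

Inductive tsn : nat -> St -> St -> Prop :=
| tsn0 s : tsn 0 s s
| tsnS n s s1 s' : tr s tau s1 -> tsn n s1 s' -> tsn (S n) s s'.

Lemma ts_tsn a b : ts a b -> exists n, tsn n a b.
Proof.
  induction 1 as [s|s s1 s' H1 H2 [n IH]].
  - exists 0; constructor.
  - exists (S n); econstructor; eauto.
Qed.

Lemma tsn_ts n a b : tsn n a b -> ts a b.
Proof. induction 1; [apply ts_refl| eapply ts_step; eauto]. Qed.

Lemma gstep_ts x R t s s' : gstep tau tr x R t s s' -> ts s s'.
Proof. destruct x; simpl; tauto. Qed.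

Lemma gstep_mono x (R R' : St -> St -> Prop) t s s' :
  (forall a b, R a b -> R' a b) -> gstep tau tr x R t s s' -> gstep tau tr x R' t s s'.
Proof. destruct x; simpl; firstorder. Qed.

Lemma gstep_pre x R s q t t1 : ts q t -> gstep tau tr x R s t t1 -> R s q -> gstep tau tr x R s q t1.
Proof. destruct x; simpl; intuition; eapply ts_trans; eauto. Qed.

Lemma gstep_of x (R : St -> St -> Prop) s t c : ts t c -> R s t -> R s c -> gstep tau tr x R s t c.
Proof. destruct x; simpl; auto. Qed.

Lemma gstep_intro x (R : St -> St -> Prop) t s c :
  ts s c -> (x = B -> R t s /\ R t c) -> gstep tau tr x R t s c.
Proof. destruct x; simpl; intuition. Qed.

Definition semi (x y : Mode) (R : St -> St -> Prop) : Prop :=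
 (forall s t, R s t -> R t s) /\
 (forall s t a s', R s t -> tr s a s' ->
   (a = tau /\ exists t', ts t t' /\ R s t' /\ R s' t') \/
   (exists t' t1 t2, gstep tau tr x R s t t1 /\ tr t1 a t2 /\
                     gstep tau tr y R s' t2 t' /\ R s' t')).

Definition SB x y s t := exists R, semi x y R /\ R s t.

Lemma sub_SB x y R : semi x y R -> forall a b, R a b -> SB x y a b.
Proof. intros; exists R; auto. Qed.

Lemma SB_semi x y : semi x y (SB x y).
Proof.
  split.
  - intros s t [R [[Hs Ht] Hr]]. exists R; split; [split|]; auto.
  - intros s t a s' [R [HR Hst]] Hs. pose proof (sub_SB HR) as Hsub.
    destruct HR as [Hsym Htr].
    destruct (Htr _ _ _ _ Hst Hs) as [[Ha [t' [H1 [H2 H3]]]] | [t' [t1 [t2 [H1 [H2 [H3 H4]]]]]]].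
    + left. split; auto. exists t'. auto.
    + right. exists t', t1, t2. repeat split; eauto using gstep_mono.
Qed.

Lemma SB_sym x y s t : SB x y s t -> SB x y t s.
Proof. apply (SB_semi x y). Qed.

Lemma bisim_semi x y R : generic_bisim tau tr x y R -> semi x y R.
Proof.
  intros [Hsym Htr]. split; auto.
  intros s t a s' Hst Hs. destruct (Htr _ _ _ _ Hst Hs) as [[Ha H]|H]; auto.
  left. split; auto. exists t. split; [apply ts_refl|]; auto.
Qed.

Lemma SB_transfer x y t s u : SB x y t s -> ts t u -> exists v, ts s v /\ SB x y u v.
Proof.
  intros Hts Htu. revert s Hts. induction Htu as [t|t t1 u H1 H2 IH]; intros s Hts.
  - exists s. split; auto. apply ts_refl.
  - destruct (proj2 (SB_semi x y) _ _ _ _ Hts H1)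
      as [[_ [t' [Ha [Hb Hc]]]] | [t' [k1 [k2 [Ha [Hb [Hc Hd]]]]]]].
    + destruct (IH _ Hc) as [v [Hv1 Hv2]]. exists v; split; auto. eapply ts_trans; eauto.
    + destruct (IH _ Hd) as [v [Hv1 Hv2]]. exists v; split; auto.
      apply gstep_ts in Ha. apply gstep_ts in Hc.
      eapply ts_trans; [exact Ha|]. eapply ts_step; [exact Hb|]. eapply ts_trans; eauto.
Qed.

Section Stut.
Variables x y : Mode.
Definition Rst (p q : St) : Prop :=
  SB x y p q \/ (exists t t1, SB x y p t /\ ts t q /\ ts q t1 /\ SB x y p t1)
             \/ (exists t t1, SB x y q t /\ ts t p /\ ts p t1 /\ SB x y q t1).

Lemma Rst_semi : semi x y Rst.
Proof.
  assert (Hin : forall a b, SB x y a b -> Rst a b) by (intros; left; auto).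
  split.
  - intros p q [H|[H|H]]; unfold Rst.
    + left; apply SB_sym; auto.
    + right; right; auto.
    + right; left; auto.
  - intros p q a p' Hpq Hp.
    destruct Hpq as [H|[[t [t1 [H1 [H2 [H3 H4]]]]]|[t [t1 [H1 [H2 [H3 H4]]]]]]].
    + destruct (proj2 (SB_semi x y) _ _ _ _ H Hp)
        as [[Ha [t' [Hb [Hc Hd]]]] | [t' [k1 [k2 [Hb [Hc [Hd He]]]]]]].
      * left; split; auto. exists t'; auto.
      * right; exists t', k1, k2; repeat split; eauto using gstep_mono.
    + destruct (proj2 (SB_semi x y) _ _ _ _ H4 Hp)
        as [[Ha [t' [Hb [Hc Hd]]]] | [t' [k1 [k2 [Hb [Hc [Hd He]]]]]]].
      * left; split; auto. exists t'; split; [eapply ts_trans; eauto|auto].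
      * right; exists t', k1, k2; split; [|split; [auto|split; [eauto using gstep_mono|auto]]].
        eapply gstep_pre; [|eapply gstep_mono; [exact Hin|exact Hb]|].
        -- eauto.
        -- right; left; exists t, t1; auto.
    + destruct (SB_transfer (SB_sym H1) H2) as [v [Hv1 Hv2]].
      destruct (proj2 (SB_semi x y) _ _ _ _ Hv2 Hp)
        as [[Ha [t' [Hb [Hc Hd]]]] | [t' [k1 [k2 [Hb [Hc [Hd He]]]]]]].
      * left; split; auto. exists t'; split; [eapply ts_trans; eauto|auto].
      * right; exists t', k1, k2; split; [|split; [auto|split; [eauto using gstep_mono|auto]]].
        eapply gstep_pre; [|eapply gstep_mono; [exact Hin|exact Hb]|].
        -- eauto.
        -- right; right; exists t, t1; auto.
Qed.

Lemma stutter s t u t1 : SB x y s t -> ts t u -> ts u t1 -> SB x y s t1 -> SB x y s u.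
Proof.
  intros. apply (sub_SB Rst_semi). right; left; exists t, t1; auto.
Qed.

Lemma SB_bisim : generic_bisim tau tr x y (SB x y).
Proof.
  split; [apply SB_sym|].
  intros s t a s' Hst Hs.
  destruct (proj2 (SB_semi x y) _ _ _ _ Hst Hs) as [[Ha [t' [Hb [Hc Hd]]]] | H]; [|right; exact H].
  destruct (ts_last Hb) as [<-|[c [Hc1 Hc2]]].
  - left; auto.
  - right. exists t', c, t'. subst a. repeat split; auto.
    + apply gstep_of; auto. apply (stutter Hst Hc1 (ts_one Hc2) Hc).
    + apply gstep_of; auto using ts_refl.
Qed.
End Stut.
End Gen.

Section Game.
Context {St Act : Type} (tau : Act) (tr : St -> Act -> St -> Prop).
Notation ts := (tau_star tau tr).
Notation C := (config St Act).

Section GE.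
Variable E : tagset.

Definition wins_with (sigma : strategy St Act) (c : C) :=
  legal_strategy tau tr E sigma c /\
  forall p len, is_play tau tr E sigma c p len -> dup_wins_play p len.

Lemma hist_S (p : nat -> C) n : hist p (S n) = hist p n ++ [p n].
Proof. unfold hist. rewrite seq_S, map_app. reflexivity. Qed.

Lemma cons_weaken sigma (p : nat -> C) n k :
  consistent_prefix tau tr E sigma p n -> k <= n -> consistent_prefix tau tr E sigma p k.
Proof. intros H Hk i Hi. apply H. lia. Qed.

Definition concat (p q : nat -> C) n i := if i <? n then p i else q (i - n).

Lemma concat_le p q n k : q 0 = p n -> k <= n -> concat p q n k = p k.
Proof.
  unfold concat; intros Hq Hk. destruct (k <? n) eqn:Ek; auto.
  apply Nat.ltb_ge in Ek. assert (k = n) by lia. subst. rewrite Nat.sub_diag; auto.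
Qed.

Lemma concat_ge p q n j : concat p q n (n + j) = q j.
Proof.
  unfold concat. destruct (n + j <? n) eqn:Ek; [apply Nat.ltb_lt in Ek; lia|].
  f_equal; lia.
Qed.

Lemma hist_concat_le p q n k : q 0 = p n -> k <= n -> hist (concat p q n) k = hist p k.
Proof.
  intros Hq Hk. unfold hist. apply map_ext_in. intros i Hi. apply in_seq in Hi.
  apply concat_le; auto; lia.
Qed.

Lemma hist_concat_ge p q n j : q 0 = p n -> hist (concat p q n) (n + j) = hist p n ++ hist q j.
Proof.
  intros Hq. induction j.
  - rewrite Nat.add_0_r, hist_concat_le; auto. simpl. rewrite app_nil_r; auto.
  - rewrite Nat.add_succ_r, !hist_S, IHj, concat_ge, app_assoc. reflexivity.
Qed.

Lemma cons_concat sigma p q n m :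
  q 0 = p n -> consistent_prefix tau tr E sigma p n ->
  consistent_prefix tau tr E (fun h => sigma (hist p n ++ h)) q m ->
  consistent_prefix tau tr E sigma (concat p q n) (n + m).
Proof.
  intros Hq Hp Hq' i Hi. destruct (le_lt_dec n i) as [Hni|Hin].
  - replace i with (n + (i - n)) by lia. rewrite <- Nat.add_succ_r, !concat_ge, hist_concat_ge; auto.
    apply Hq'. lia.
  - rewrite !concat_le, hist_concat_le; auto; try lia.
Qed.

Lemma shift_wins sigma c0 p n :
  wins_with sigma c0 -> p 0 = c0 -> consistent_prefix tau tr E sigma p n ->
  wins_with (fun h => sigma (hist p n ++ h)) (p n).
Proof.
  intros [Hleg Hw] Hp0 Hp. split.
  - intros q m Hq0 Hq Hown.
    pose proof (cons_concat Hq0 Hp Hq) as Hc.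
    assert (Hr0 : concat p q n 0 = c0) by (rewrite concat_le; auto; lia).
    pose proof (Hleg _ _ Hr0 Hc) as H. rewrite concat_ge, hist_concat_ge in H; auto.
  - intros q len [Hq0 Hpl].
    assert (Hr0 : concat p q n 0 = c0) by (rewrite concat_le; auto; lia).
    destruct len as [m|].
    + destruct Hpl as [Hc Hnm].
      assert (H := Hw (concat p q n) (Fin (n + m))). simpl in H.
      rewrite concat_ge in H. apply H. split; auto. split.
      * apply cons_concat; auto.
      * rewrite concat_ge. auto.
    + assert (H := Hw (concat p q n) Inf). simpl in H |- *.
      intros N. destruct (H (conj Hr0 (fun k => cons_weaken (cons_concat (m := k) Hq0 Hp (Hpl k)) (Nat.le_add_l k n))) (N + n))
        as [i [Hi Hci]].
      exists (i - n). split; [lia|]. replace i with (n + (i - n)) in Hci by lia.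
      rewrite concat_ge in Hci. auto.
Qed.

Lemma W_spoiler c d : dup_wins tau tr E c -> cown c = Spoiler -> move tau tr E c d -> dup_wins tau tr E d.
Proof.
  intros [sigma Hw] Hown Hmv.
  set (p := fun i : nat => match i with 0 => c | _ => d end).
  assert (Hc : consistent_prefix tau tr E sigma p 1).
  { intros i Hi. assert (i = 0) by lia. subst. simpl. split; auto. rewrite Hown; discriminate. }
  exists (fun h => sigma (hist p 1 ++ h)). exact (shift_wins Hw eq_refl Hc).
Qed.

Definition toD (c : C) : C := Cfg (cpos c) (cch c) (cm c) false Duplicator.

Inductive DF : C -> Prop :=
| DFr c d : move tau tr E c d -> dup_wins tau tr E d -> cch d = None -> DF c
| DFc c d : move tau tr E c d -> dup_wins tau tr E d -> cch d <> None -> DF (toD d) -> DF c.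

Lemma move_D_inv c d : move tau tr E c d -> cown c = Duplicator ->
  cown d = Spoiler /\ (cch d = None -> ccheck d = true) /\ (cch d <> None -> ccheck d = false).
Proof. destruct 1; simpl; intros Ho; try discriminate; intuition congruence. Qed.

Lemma move_S_inv c d : move tau tr E c d -> cown c = Spoiler ->
  cown d = Duplicator /\ (ccheck d = true \/ d = toD c \/ cch c = None).
Proof. destruct 1; simpl; intros Ho; try discriminate; unfold toD; simpl; intuition. Qed.

Section Play.
Variable sigma : strategy St Act.
Variable c0 : C.

Definition nxt (l : list C) : C :=
  let c := last l c0 in
  match cown c with Spoiler => toD c | Duplicator => sigma (removelast l) c end.

Fixpoint LL n : list C := match n with 0 => [c0] | S n => LL n ++ [nxt (LL n)] end.

Definition pp n := last (LL n) c0.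

Lemma LL_eq n : LL n = hist pp n ++ [pp n].
Proof.
  induction n.
  - reflexivity.
  - rewrite hist_S, <- IHn. unfold pp. simpl. rewrite last_last. reflexivity.
Qed.

Lemma pp_S n : pp (S n) =
  match cown (pp n) with Spoiler => toD (pp n) | Duplicator => sigma (hist pp n) (pp n) end.
Proof.
  unfold pp at 1. simpl. rewrite last_last. unfold nxt. rewrite LL_eq, last_last, removelast_last.
  reflexivity.
Qed.
End Play.

Lemma W_DF c : dup_wins tau tr E c -> cown c = Duplicator -> DF c.
Proof.
  intros [sigma Hw] Hown. apply NNPP; intro HnDF.
  set (p := pp sigma c).
  assert (Hp0 : p 0 = c) by reflexivity.
  assert (Hcl : forall n, consistent_prefix tau tr E sigma p n /\
     ((cown (p n) = Duplicator /\ ~ DF (p n)) \/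
      (cown (p n) = Spoiler /\ cch (p n) <> None /\ ~ DF (toD (p n)))) /\
     (0 < n -> ccheck (p n) = false)).
  { induction n as [|n [Hc [[[Hd Hn]|[Hs [Hch Hn]]] _]]].
    - split; [intros i Hi; lia|]. split; [left; rewrite Hp0; auto|]. lia.
    - assert (HpS : p (S n) = sigma (hist p n) (p n)) by (unfold p; rewrite pp_S; fold p; rewrite Hd; reflexivity).
      assert (Hmv : move tau tr E (p n) (p (S n))) by (rewrite HpS; apply (proj1 Hw p n Hp0 Hc Hd)).
      assert (HcS : consistent_prefix tau tr E sigma p (S n)).
      { intros i Hi. destruct (Nat.eq_dec i n) as [->|]; [split; auto|apply Hc; lia]. }
      assert (HW : dup_wins tau tr E (p (S n))) by (eexists; exact (shift_wins Hw Hp0 HcS)).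
      destruct (move_D_inv Hmv Hd) as [HoS [_ Hck]].
      assert (Hnn : cch (p (S n)) <> None) by (intro Hnone; apply Hn; eapply DFr; eauto).
      split; auto. split.
      + right. split; auto. split; auto. intro HD. apply Hn. eapply DFc; eauto.
      + intros _. auto.
    - assert (HpS : p (S n) = toD (p n)) by (unfold p; rewrite pp_S; fold p; rewrite Hs; reflexivity).
      assert (Hmv : move tau tr E (p n) (p (S n))).
      { rewrite HpS. destruct (p n) as [[s t] ch m r o]. simpl in *. subst o. unfold toD; simpl.
        apply mS1; auto. }
      split.
      + intros i Hi. destruct (Nat.eq_dec i n) as [->|]; [split; auto|apply Hc; lia].
        rewrite Hs; discriminate.
      + split.
        * left. rewrite HpS. split; auto.
        * intros _. rewrite HpS. reflexivity. }
  assert (Hplay : is_play tau tr E sigma c p Inf) by (split; auto; intro n; apply Hcl).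
  destruct (proj2 Hw p Inf Hplay 1) as [i [Hi Hci]].
  destruct (Hcl i) as [_ [_ Hf]]. rewrite Hf in Hci; [discriminate|lia].
Qed.

End GE.

Section Sound.
Variables x y : Mode.
Notation E := (Exy x y).
Notation W := (dup_wins tau tr (Exy x y)).

Lemma ExF : E Frown = true -> x = O. Proof. destruct x; simpl; congruence. Qed.
Lemma EyS : E Smile = true -> y = O. Proof. destruct y; simpl; congruence. Qed.

Definition RW (p q : St) : Prop :=
  (exists r, W (Cfg (p,q) None None r Spoiler)) \/
  (exists a p' r, W (Cfg (p,q) (Some (a,p')) (Some (q,Frown)) r Spoiler)) \/
  (exists a r, W (Cfg (p,q) (Some (a,p)) (Some (q,Smile)) r Spoiler)).

Definition RG p q := RW p q \/ RW q p.

Definition Match (R : St -> St -> Prop) p q b p' :=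
  (b = tau /\ exists t', ts q t' /\ R p t' /\ R p' t') \/
  (exists t' t1 t2, gstep tau tr x R p q t1 /\ tr t1 b t2 /\ gstep tau tr y R p' t2 t' /\ R p' t').

Lemma RG_reset p q r : W (Cfg (p,q) None None r Spoiler) -> RG p q.
Proof. intro H; left; left; eauto. Qed.

Section Fresh.
Variables (u v u' : St) (a : Act).
Hypothesis Huv : RG u v.

Definition Inv (c : C) : Prop :=
  exists P1 P2 m f r, c = Cfg (P1,P2) (Some (a,u')) (Some (m,f)) r Duplicator /\
    (f = Frown -> P1 = u /\ ts v m /\ (x = B -> RG u m)) /\
    (f = Smile -> exists t1 t2, ts v t1 /\ (x = B -> RG u t1) /\ tr t1 a t2 /\ ts t2 m /\
                               (y = B -> RG u' t2)).

Lemma fresh_gen c : DF E c -> Inv c -> Match RG u v a u'.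
Proof.
  induction 1 as [c d Hmv Hwd Hnone|c d Hmv Hwd Hnone HDF IH];
    intros [P1 [P2 [m [f [r [-> [HF HS]]]]]]].
  - inversion Hmv; subst; simpl in Hnone; try discriminate.
    +
      apply RG_reset in Hwd. destruct f.
      * destruct (HF eq_refl) as [-> [Hvm Hxm]].
        assert (Hx : x = O \/ x = B) by (destruct x; auto).
        destruct Hx as [Hx|Hx].
        -- destruct (ts_last Hvm) as [<-|[c' [Hc1 Hc2]]].
           ++ left. split; auto. exists v. split; [apply ts_refl|]; auto.
           ++ right. exists m, c', m. split; [|split; [auto|split; [|auto]]].
              ** apply gstep_intro; auto. congruence.
              ** apply gstep_intro; auto using ts_refl.
        -- left. split; auto. exists m. auto.
      * destruct (HS eq_refl) as [t1 [t2 [H1 [H2 [H3 [H4 H5]]]]]].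
        right. exists m, t1, t2. split; [|split; [auto|split; [|auto]]].
        -- apply gstep_intro; auto.
        -- apply gstep_intro; auto.
    +
      apply RG_reset in Hwd. destruct (HF eq_refl) as [-> [Hvm Hxm]].
      right. exists v', m, v'. split; [|split; [auto|split; [|auto]]].
      -- apply gstep_intro; auto.
      -- apply gstep_intro; auto using ts_refl.
    +
      apply RG_reset in Hwd. destruct (HS eq_refl) as [t1 [t2 [H1 [H2 [H3 [H4 H5]]]]]].
      right. exists v', t1, t2. split; [|split; [auto|split; [|auto]]].
      -- apply gstep_intro; auto.
      -- apply gstep_intro; auto. eapply ts_snoc; eauto.
  - apply IH. clear IH HDF.
    inversion Hmv; subst; simpl in Hnone; try congruence; unfold toD; simpl.
    +
      destruct (HF eq_refl) as [-> [Hvm Hxm]].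
      assert (HR : RG u' v') by (left; right; right; eauto).
      eexists _, _, _, Smile, _. split; [reflexivity|]. split; [discriminate|].
      intros _. exists m, v'. repeat split; auto using ts_refl.
    +
      destruct (HF eq_refl) as [-> [Hvm Hxm]].
      eexists _, _, _, Smile, _. split; [reflexivity|]. split; [discriminate|].
      intros _. exists m, v'. repeat split; auto using ts_refl.
      intro Hy. match goal with H : Exy _ _ Smile = true |- _ => apply EyS in H end. congruence.
    +
      eexists _, _, _, f, _. split; [reflexivity|]. split.
      * intros ->. destruct (HF eq_refl) as [-> [Hvm Hxm]]. split; auto.
        split; [eapply ts_snoc; eauto|]. intros _. left; right; left; eauto.
      * intros ->. destruct (HS eq_refl) as [t1 [t2 [H1 [H2 [H3 [H4 H5]]]]]].
        exists t1, t2. repeat split; auto. eapply ts_snoc; eauto.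
    +
      eexists _, _, _, f, _. split; [reflexivity|]. split.
      * intros ->. destruct (HF eq_refl) as [-> [Hvm Hxm]]. split; auto.
        split; [eapply ts_snoc; eauto|]. intro Hx. match goal with H : Exy _ _ Frown = true |- _ => apply ExF in H end. congruence.
      * intros ->. destruct (HS eq_refl) as [t1 [t2 [H1 [H2 [H3 [H4 H5]]]]]].
        exists t1, t2. repeat split; auto. eapply ts_snoc; eauto.
Qed.
End Fresh.

Lemma fresh u v a u' r : W (Cfg (u,v) (Some (a,u')) (Some (v,Frown)) r Duplicator) -> RG u v ->
  Match RG u v a u'.
Proof.
  intros Hw Huv. eapply fresh_gen; [exact Huv|apply W_DF; [exact Hw|reflexivity]|].
  exists u, v, v, Frown, r. split; [reflexivity|]. split.
  - intros _. split; auto. split; auto using ts_refl.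
  - discriminate.
Qed.

Lemma smile_chain Q u' a c : DF E c ->
  (exists P1 P2 m r, c = Cfg (P1,P2) (Some (a,u')) (Some (m,Smile)) r Duplicator /\ ts Q m) ->
  exists t' r', ts Q t' /\ W (Cfg (u',t') None None r' Spoiler).
Proof.
  induction 1 as [c d Hmv Hwd Hnone|c d Hmv Hwd Hnone HDF IH];
    intros [P1 [P2 [m [r [-> Hm]]]]].
  - inversion Hmv; subst; simpl in Hnone; try discriminate.
    + exists m, true. auto.
    + exists v', true. split; auto. eapply ts_snoc; eauto.
  - apply IH. clear IH HDF.
    inversion Hmv; subst; simpl in Hnone; try congruence; unfold toD; simpl.
    + eexists _, _, _, _. split; [reflexivity|]. eapply ts_snoc; eauto.
    + eexists _, _, _, _. split; [reflexivity|]. eapply ts_snoc; eauto.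
Qed.

Lemma Match_pre P Q t' b p' : ts Q t' -> RG P Q -> Match RG P t' b p' -> Match RG P Q b p'.
Proof.
  intros HQ HPQ [[Hb [t'' [H1 [H2 H3]]]]|[t'' [t1 [t2 [H1 [H2 [H3 H4]]]]]]].
  - left. split; auto. exists t''. split; auto. eapply ts_trans; eauto.
  - right. exists t'', t1, t2. split; auto. eapply gstep_pre; eauto.
Qed.

Lemma RW_W P Q : RW P Q -> exists c m r, W (Cfg (P,Q) c m r Spoiler).
Proof. intros [[r H]|[[a [p' [r H]]]|[a [r H]]]]; eauto. Qed.

Lemma resp_rev P Q b p' : RW Q P -> tr P b p' -> Match RG P Q b p'.
Proof.
  intros H Hp. destruct (RW_W H) as [c [m [r Hw]]].
  eapply fresh; [|right; exact H].
  eapply W_spoiler; [exact Hw|reflexivity|]. apply mS3. exact Hp.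
Qed.

Lemma resp P Q b p' : RW P Q -> tr P b p' -> Match RG P Q b p'.
Proof.
  intros H Hp. assert (HR : RG P Q) by (left; exact H).
  destruct H as [[r Hw]|[[a [p0 [r Hw]]]|[a [r Hw]]]].
  - eapply fresh; [|exact HR]. eapply W_spoiler; [exact Hw|reflexivity|]. apply mS2a. exact Hp.
  - destruct (classic ((b,p') = (a,p0))) as [Heq|Hne].
    + inversion Heq; subst. eapply fresh; [|exact HR].
      eapply W_spoiler; [exact Hw|reflexivity|]. apply mS1. discriminate.
    + eapply fresh; [|exact HR]. eapply W_spoiler; [exact Hw|reflexivity|].
      apply mS2b; [exact Hp|]. congruence.
  - destruct (classic ((b,p') = (a,P))) as [Heq|Hne].
    + inversion Heq; subst.
      assert (Hw1 : W (Cfg (P,Q) (Some (a,P)) (Some (Q,Smile)) false Duplicator)).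
      { eapply W_spoiler; [exact Hw|reflexivity|]. apply mS1. discriminate. }
      destruct (smile_chain (Q := Q) (u' := P) (a := a) (W_DF Hw1 eq_refl)) as [t' [r' [HQ Hw2]]].
      { eexists _, _, _, _. split; [reflexivity|]. apply ts_refl. }
      apply Match_pre with t'; auto.
      eapply fresh; [|eapply RG_reset; exact Hw2].
      eapply W_spoiler; [exact Hw2|reflexivity|]. apply mS2a. exact Hp.
    + eapply fresh; [|exact HR]. eapply W_spoiler; [exact Hw|reflexivity|].
      apply mS2b; [exact Hp|]. congruence.
Qed.

Lemma RG_semi : semi tau tr x y RG.
Proof.
  split.
  - intros p q [H|H]; [right|left]; auto.
  - intros p q b p' [H|H] Hp; [apply resp|apply resp_rev]; auto.
Qed.

Lemma game_SB s t : W (Cfg (s,t) None None false Spoiler) -> SB tau tr x y s t.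
Proof. intro H. apply (sub_SB RG_semi). eapply RG_reset; eauto. Qed.

End Sound.

Lemma gstep_cases md (R : St -> St -> Prop) t s s' :
  gstep tau tr md R t s s' -> ts s s' /\ (md = B -> R t s /\ R t s').
Proof. destruct md; simpl; intuition discriminate. Qed.

Lemma notB md : (md = B -> False) -> md = O.
Proof. destruct md; auto. intro H; exfalso; auto. Qed.

Lemma least_ex (P : nat -> Prop) : (exists n, P n) -> exists n, P n /\ forall k, P k -> n <= k.
Proof.
  intros [n Hn]. induction n as [n IH] using lt_wf_ind.
  destruct (classic (exists k, k < n /\ P k)) as [[k [Hk1 Hk2]]|Hno].
  - exact (IH k Hk1 Hk2).
  - exists n. split; auto. intros k Hk. destruct (le_lt_dec n k); auto.
    exfalso; apply Hno; eauto.
Qed.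

Section Compl.
Variables x y : Mode.
Notation E := (Exy x y).
Notation SBr := (SB tau tr x y).

Lemma EyS' : y = O -> E Smile = true. Proof. intros ->; destruct x; reflexivity. Qed.
Lemma ExF' : x = O -> E Frown = true. Proof. intros ->; reflexivity. Qed.

Definition PlanF n P1 P2 a u' m : Prop :=
  SBr P1 P2 /\ ((n = 0 /\ a = tau /\ SBr u' m) \/
   exists k j t1 t2 t', n = S (k + j) /\ tsn tau tr k m t1 /\ tr t1 a t2 /\ tsn tau tr j t2 t' /\
     SBr u' t' /\ (x = B -> P2 = m /\ SBr P1 t1) /\ (y = B -> j = 0)).

Definition PlanS n P1 P2 (u' m : St) : Prop :=
  SBr P1 P2 /\ y = O /\ 1 <= n /\ exists t', tsn tau tr n m t' /\ SBr u' t'.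

Definition Plan n (c : C) : Prop :=
  match c with
  | Cfg (P1,P2) (Some (a,u')) (Some (m,Frown)) _ _ => PlanF n P1 P2 a u' m
  | Cfg (P1,P2) (Some (a,u')) (Some (m,Smile)) _ _ => PlanS n P1 P2 u' m
  | _ => False
  end.

Definition Good (c : C) : Prop :=
  match c with
  | Cfg (p,q) None _ _ Spoiler => SBr p q
  | Cfg _ None _ _ Duplicator => False
  | _ => exists n, Plan n c
  end.

Lemma plan_irrel n pos ch mm r o r' o' :
  Plan n (Cfg pos ch mm r o) -> Plan n (Cfg pos ch mm r' o').
Proof. destruct pos, ch as [[a u']|], mm as [[m []]|]; simpl; auto. Qed.

Lemma plan_some n c : Plan n c -> cch c <> None.
Proof. destruct c as [[P1 P2] [[a u']|] mm r o]; simpl; [congruence|]. destruct mm as [[m []]|]; auto. Qed.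

Definition mu (c : C) : nat :=
  match excluded_middle_informative (exists n, Plan n c) with
  | left H => proj1_sig (constructive_indefinite_description _ (least_ex _ H))
  | right _ => 0
  end.

Lemma mu_spec c n : Plan n c -> Plan (mu c) c /\ mu c <= n.
Proof.
  intro Hn. unfold mu. destruct (excluded_middle_informative _) as [H|H]; [|exfalso; eauto].
  destruct (constructive_indefinite_description _ _) as [k [Hk Hmin]]; simpl; auto.
Qed.

Definition Next (c d : C) : Prop :=
  move tau tr E c d /\ Good d /\ (cch d = None \/ exists n, n < mu c /\ Plan n d).

Lemma fresh_plan p q a p' : SBr p q -> tr p a p' -> exists n, PlanF n p q a p' q.
Proof.
  intros H Hp.
  destruct (proj2 (SB_semi tau tr x y) p q a p' H Hp)
    as [[Ha [t' [H1 [H2 H3]]]] | [t' [t1 [t2 [H1 [H2 [H3 H4]]]]]]].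
  - destruct (ts_last H1) as [<-|[c [Hc1 Hc2]]].
    + exists 0. split; auto.
    + destruct (ts_tsn Hc1) as [k Hk]. exists (S (k + 0)). split; auto. right.
      exists k, 0, c, t', t'. subst a. repeat split; auto; try constructor.
      eapply stutter; [exact H|exact Hc1|apply ts_one; exact Hc2|exact H2].
  - destruct (gstep_cases _ _ _ _ _ H1) as [Hq1 Hx]. destruct (gstep_cases _ _ _ _ _ H3) as [H23 Hy].
    destruct (ts_tsn Hq1) as [k Hk].
    assert (Hy' : y = O \/ y = B) by (destruct y; auto).
    destruct Hy' as [Hy'|Hy'].
    + destruct (ts_tsn H23) as [j Hj]. exists (S (k + j)). split; auto. right.
      exists k, j, t1, t2, t'. repeat split; auto.
      all: intros; try congruence; try (apply Hx; assumption).
    + exists (S (k + 0)). split; auto. right.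
      exists k, 0, t1, t2, t2. repeat split; auto; try constructor.
      all: try (apply Hy; assumption); try (apply Hx; assumption).
Qed.

Lemma plan_step n c : cown c = Duplicator -> Plan n c ->
  exists d, move tau tr E c d /\ Good d /\ (cch d = None \/ exists n', n' < n /\ Plan n' d).
Proof.
  intros Hown Hn.
  destruct c as [[P1 P2] ch mm r o]; simpl in Hown; subst o.
  destruct ch as [[a u']|]; [|contradiction]. destruct mm as [[m f]|]; [|contradiction].
  destruct f; simpl in Hn.
  - destruct Hn as [H12 [[Hn [Ha Hu]]|[k [j [t1 [t2 [t' [Hn [Hk [Ht [Hj [Hu' [Hx Hy]]]]]]]]]]]]].
    + exists (Cfg (u', m) None None true Spoiler). split; [apply mD1; auto|]. simpl; auto.
    + destruct k as [|k].
      * assert (m = t1) by (inversion Hk; auto). subst t1. destruct j as [|j].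
        -- assert (t2 = t') by (inversion Hj; auto). subst t'.
           exists (Cfg (u', t2) None None true Spoiler). split; [apply mD2b; auto|]. simpl; auto.
        -- assert (HyO : y = O) by (apply notB; intro HB; specialize (Hy HB); discriminate).
           exists (Cfg (P1,P2) (Some (a,u')) (Some (t2,Smile)) false Spoiler).
           split; [apply mD2c; auto; apply EyS'; auto|].
           split.
           ++ exists (S j). simpl. repeat split; auto; try lia. exists t'; auto.
           ++ right. exists (S j). split; [lia|]. simpl. repeat split; auto; try lia. exists t'; auto.
      * inversion Hk as [|k' s0 s1 s2 Hs1 Hs12]; subst.
        assert (Hx' : x = O \/ x = B) by (destruct x; auto).
        destruct Hx' as [HxO|HxB].
        -- exists (Cfg (P1,P2) (Some (a,u')) (Some (s1,Frown)) false Spoiler).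
           split; [apply mD3c; auto; apply ExF'; auto|].
           assert (HP : PlanF (S (k + j)) P1 P2 a u' s1).
           { split; auto. right. exists k, j, t1, t2, t'. repeat split; auto; congruence. }
           split; [exists (S (k + j)); exact HP|]. right. exists (S (k + j)). split; [lia|exact HP].
        -- destruct (Hx HxB) as [-> Hp1].
           exists (Cfg (P1,s1) (Some (a,u')) (Some (s1,Frown)) false Spoiler).
           split; [apply mD3a; auto|].
           assert (Hs : SBr P1 s1).
           { eapply stutter; [exact H12|apply ts_one; exact Hs1|apply tsn_ts in Hs12; exact Hs12|exact Hp1]. }
           assert (HP : PlanF (S (k + j)) P1 s1 a u' s1).
           { split; auto. right. exists k, j, t1, t2, t'. repeat split; auto. }
           split; [exists (S (k + j)); exact HP|]. right. exists (S (k + j)). split; [lia|exact HP].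
  - destruct Hn as [H12 [HyO [Hn1 [t' [Hn Hu']]]]].
    inversion Hn as [|n1 s0 s1 s2 Hs1 Hs12]; subst; [lia|].
    inversion Hs12 as [|n2 s3 s4 s5 Hs4 Hs45]; subst.
    + exists (Cfg (u', t') None None true Spoiler). split; [apply mD3b; auto|]. simpl; auto.
    + exists (Cfg (P1,P2) (Some (a,u')) (Some (s1,Smile)) false Spoiler).
      split; [apply mD3c; auto; apply EyS'; auto|].
      assert (HP : PlanS (S n2) P1 P2 u' s1).
      { repeat split; auto; try lia. exists t'; split; auto. }
      split; [exists (S n2); exact HP|]. right. exists (S n2). split; [lia|exact HP].
Qed.

Lemma next_exists c : cown c = Duplicator -> (exists n, Plan n c) -> exists d, Next c d.
Proof.
  intros Hown [n Hn]. destruct (mu_spec _ _ Hn) as [Hmu _].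
  destruct (plan_step _ _ Hown Hmu) as [d Hd]. exists d. exact Hd.
Qed.

Lemma good_pos s t ch mm r : Good (Cfg (s,t) ch mm r Spoiler) -> SBr s t.
Proof.
  destruct ch as [[a u']|]; simpl; auto.
  intros [n Hn]. destruct mm as [[m []]|]; simpl in Hn; try contradiction; apply Hn.
Qed.

Lemma good_D c : Good c -> cown c = Duplicator -> exists n, Plan n c.
Proof. destruct c as [[p q] [ch|] mm r []]; simpl; intros; try discriminate; auto; contradiction. Qed.

Lemma spoiler_good c d : Good c -> cown c = Spoiler -> move tau tr E c d -> Good d.
Proof.
  intros Hg Hown Hmv. destruct Hmv; simpl in Hown; try discriminate.
  - destruct c as [[a u']|]; [|congruence]. destruct Hg as [n Hn].
    exists n. eapply plan_irrel; eauto.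
  - simpl in Hg. destruct (fresh_plan Hg H) as [n Hn]. exists n. exact Hn.
  - apply good_pos in Hg. destruct (fresh_plan Hg H) as [n Hn]. exists n. exact Hn.
  - apply good_pos in Hg. apply SB_sym in Hg. destruct (fresh_plan Hg H) as [n Hn]. exists n. exact Hn.
Qed.

Definition sig0 : strategy St Act := fun h c =>
  match excluded_middle_informative (exists d, Next c d) with
  | left H => proj1_sig (constructive_indefinite_description _ H)
  | right _ => c
  end.

Lemma sig0_next h c : (exists d, Next c d) -> Next c (sig0 h c).
Proof.
  intro H. unfold sig0. destruct (excluded_middle_informative _) as [H'|H']; [|contradiction].
  destruct (constructive_indefinite_description _ _); simpl; auto.
Qed.

Section Run.
Variables s t : St.
Hypothesis Hst : SBr s t.
Notation c0 := (Cfg (s,t) None None false Spoiler : C).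

Lemma reach_good p n : p 0 = c0 -> consistent_prefix tau tr E sig0 p n -> Good (p n).
Proof.
  intros Hp0. induction n; intros Hc.
  - rewrite Hp0. simpl. exact Hst.
  - assert (IH := IHn (cons_weaken Hc (Nat.le_succ_diag_r n))).
    destruct (Hc n (Nat.lt_succ_diag_r n)) as [Hmv Hown].
    destruct (cown (p n)) eqn:Eo.
    + eapply spoiler_good; eauto.
    + rewrite (Hown eq_refl). apply sig0_next. apply next_exists; auto. apply good_D; auto.
Qed.

Lemma reach_next p n : p 0 = c0 -> consistent_prefix tau tr E sig0 p n ->
  cown (p n) = Duplicator -> Next (p n) (sig0 (hist p n) (p n)).
Proof.
  intros Hp0 Hc Hown. apply sig0_next. apply next_exists; auto. apply good_D; auto.
  eapply reach_good; eauto.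
Qed.

Lemma legal0 : legal_strategy tau tr E sig0 c0.
Proof. intros p n Hp0 Hc Hown. apply (reach_next Hp0 Hc Hown). Qed.

Section Inf.
Variable p : nat -> C.
Hypothesis Hp0 : p 0 = c0.
Hypothesis Hcons : forall k, consistent_prefix tau tr E sig0 p k.

Lemma D_step i : cown (p i) = Duplicator ->
  ccheck (p (S i)) = true \/ ccheck (p (S (S i))) = true \/
  (cown (p (S (S i))) = Duplicator /\ mu (p (S (S i))) < mu (p i)).
Proof.
  intro Hown.
  assert (Hc2 : consistent_prefix tau tr E sig0 p (S (S i))) by apply Hcons.
  destruct (Hc2 i ltac:(lia)) as [Hmv1 Hs1].
  destruct (Hc2 (S i) ltac:(lia)) as [Hmv2 _].
  assert (Hnx : Next (p i) (p (S i))).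
  { rewrite (Hs1 Hown). apply reach_next; auto. }
  destruct (move_D_inv Hmv1 Hown) as [HoS [Hck1 _]].
  destruct Hnx as [_ [_ [Hnone|[n' [Hlt Hpl]]]]]; [left; auto|].
  destruct (move_S_inv Hmv2 HoS) as [HoD [Hck|[Heq|Hnone]]].
  - right; left; auto.
  - right; right. split; auto.
    assert (Hpl2 : Plan n' (p (S (S i)))).
    { rewrite Heq. destruct (p (S i)) as [pos ch mm r o]. unfold toD; simpl. exact (plan_irrel n' pos ch mm r o false Duplicator Hpl). }
    destruct (mu_spec _ _ Hpl2) as [_ Hle]. lia.
  - exfalso. exact (plan_some _ _ Hpl Hnone).
Qed.

Lemma D_progress n : forall i, cown (p i) = Duplicator -> mu (p i) <= n ->
  exists j, i <= j /\ ccheck (p j) = true.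
Proof.
  induction n as [n IH] using lt_wf_ind. intros i Hown Hmu.
  destruct (D_step i Hown) as [H|[H|[HoD Hlt]]].
  - exists (S i); split; auto.
  - exists (S (S i)); split; auto.
  - destruct n as [|n]; [lia|].
    destruct (IH n ltac:(lia) (S (S i)) HoD ltac:(lia)) as [j [Hj1 Hj2]].
    exists j; split; auto; lia.
Qed.

Lemma any_progress i : exists j, i <= j /\ ccheck (p j) = true.
Proof.
  destruct (cown (p i)) eqn:Eo.
  - assert (Hc1 : consistent_prefix tau tr E sig0 p (S i)) by apply Hcons.
    destruct (Hc1 i ltac:(lia)) as [Hmv _].
    destruct (move_S_inv Hmv Eo) as [HoD _].
    destruct (D_progress (S i) HoD (le_n _)) as [j [Hj1 Hj2]].
    exists j; split; auto; lia.
  - exact (D_progress i Eo (le_n _)).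
Qed.
End Inf.

Lemma SB_game : game_equiv tau tr E s t.
Proof.
  exists sig0. split; [exact legal0|].
  intros p [n|] [Hp0 Hpl]; simpl.
  - destruct Hpl as [Hc Hno]. destruct (cown (p n)) eqn:Eo; auto.
    exfalso. exact (Hno _ (legal0 Hp0 Hc Eo)).
  - intros N. exact (any_progress Hp0 Hpl N).
Qed.
End Run.
End Compl.
End Game.

Theorem theorem5p2 (St Act : Type) (tau : Act) (tr : St -> Act -> St -> Prop)
  (x y : Mode) (s t : St) :
  generic_bisimilar tau tr x y s t <-> game_equiv tau tr (Exy x y) s t.
Proof.
  split.
  - intros [R [HR Hst]]. apply SB_game. exact (sub_SB (bisim_semi HR) _ _ Hst).
  - intros H. exists (SB tau tr x y). split.
    + apply SB_bisim.
    + apply game_SB. exact H.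
Qed.
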